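(* Let $V$ be a commutative unital quantale whose underlying lattice is a frame and in which $k=\top$. If $(Y,b,+)$ is a strongly unital object in $\mathsf{VGrp}$, then for every $y\in Y$, \[b(0,y)=b(y,0)\otimes b(0,y).\]
   Context: A commutative unital quantale $V$ is a complete lattice (top $\top$, bottom $\bot$) with a commutative associative operation $\otimes$ with unit $k$ preserving arbitrary joins in each variable. A $V$-category $(X,a)$: $a\colon X\times X\to V$ with $k\le a(x,x)$ and $a(x,x')\otimes a(x',x'')\le a(x,x'')$. A $V$-group $(X,a,+)$ is a $V$-category with a group structure (additive, not necessarily abelian) such that $a(x_1,x_2)\otimes a(x_1',x_2')\le a(x_1+x_1',x_2+x_2')$; $V$-homomorphisms are group homomorphisms $f$ with $a(x,x')\le b(f(x),f(x'))$; this is the category $\mathsf{VGrp}$, pointed when $k=\top$. Limits are computed as in groups with the initial structure; the product of $(X,a),(Y,b)$ carries $(a\wedge b)((x,y),(x',y'))=a(x,x')\wedge b(y,y')$; kernels and pullbacks carry the restricted structure. Two morphisms with common codomain are jointly strongly epimorphic if whenever both factor through a monomorphism $m$, $m$ is an isomorphism. A point (split epimorphism $f\colon A\to Y$ with chosen section $s$) is strong if the kernel of $f$ and $s$ are jointly strongly epimorphic, and stably strong if every pullback of it along any morphism $g\colon Z\to Y$ (with induced section) is strong. An object $Y$ is strongly unital if the point $(\pi_2\colon Y\times Y\to Y,\ \langle 1,1\rangle)$ is stably strong. *)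

(* Defs.v *)
From Stdlib Require Import ProofIrrelevance.

Set Implicit Arguments.
Unset Strict Implicit.

(* A complete lattice given by its order and arbitrary joins (qsup),
   with a commutative associative tensor with unit qk preserving all joins
   in each variable (in the first variable by commutativity). *)
Record quantale : Type := Quantale {
  qcar :> Type;
  qle : qcar -> qcar -> Prop;
  qsup : (qcar -> Prop) -> qcar;
  qten : qcar -> qcar -> qcar;
  qk : qcar;
  qle_refl : forall x, qle x x;
  qle_trans : forall x y z, qle x y -> qle y z -> qle x z;
  qle_antisym : forall x y, qle x y -> qle y x -> x = y;
  qsup_ub : forall (S : qcar -> Prop) x, S x -> qle x (qsup S);
  qsup_least : forall (S : qcar -> Prop) y, (forall x, S x -> qle x y) -> qle (qsup S) y;
  qten_comm : forall x y, qten x y = qten y x;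
  qten_assoc : forall x y z, qten x (qten y z) = qten (qten x y) z;
  qten_unit : forall x, qten qk x = x;
  qten_sup : forall x (S : qcar -> Prop),
      qten x (qsup S) = qsup (fun z => exists s, S s /\ z = qten x s)
}.

Arguments qk : clear implicits.

Definition qtop (V : quantale) : V := qsup (fun _ : V => True).
Definition qbot (V : quantale) : V := qsup (fun _ : V => False).
Definition qmeet (V : quantale) (x y : V) : V := qsup (fun z => qle z x /\ qle z y).

Definition is_frame (V : quantale) : Prop :=
  forall (x : V) (S : V -> Prop),
    qmeet x (qsup S) = qsup (fun z => exists s, S s /\ z = qmeet x s).

Section QuantaleFacts.
Variable V : quantale.

Lemma qmeet_l (x y : V) : qle (qmeet x y) x.
Proof. apply qsup_least. intros z [H _]; exact H. Qed.

Lemma qmeet_r (x y : V) : qle (qmeet x y) y.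
Proof. apply qsup_least. intros z [_ H]; exact H. Qed.

Lemma qmeet_glb (x y z : V) : qle z x -> qle z y -> qle z (qmeet x y).
Proof. intros; apply qsup_ub; split; assumption. Qed.

Lemma qten_mono_r (z x y : V) : qle x y -> qle (qten z x) (qten z y).
Proof.
  intros Hxy.
  assert (E : qsup (fun w => w = x \/ w = y) = y).
  { apply qle_antisym.
    - apply qsup_least; intros w [->| ->]; [exact Hxy | apply qle_refl].
    - apply qsup_ub; right; reflexivity. }
  rewrite <- E, qten_sup. apply qsup_ub. exists x; split; [left|]; reflexivity.
Qed.

Lemma qten_mono (x x' y y' : V) :
  qle x x' -> qle y y' -> qle (qten x y) (qten x' y').
Proof.
  intros H1 H2. apply qle_trans with (qten x y').
  - apply qten_mono_r; exact H2.
  - rewrite (qten_comm x), (qten_comm x'). apply qten_mono_r; exact H1.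
Qed.

Lemma qten_meet (a b c d : V) :
  qle (qten (qmeet a b) (qmeet c d)) (qmeet (qten a c) (qten b d)).
Proof.
  apply qmeet_glb; apply qten_mono; auto using qmeet_l, qmeet_r.
Qed.

End QuantaleFacts.

Record vgrp (V : quantale) : Type := VGrp {
  gcar :> Type;
  g0 : gcar;
  gadd : gcar -> gcar -> gcar;
  gopp : gcar -> gcar;
  gaddA : forall x y z, gadd x (gadd y z) = gadd (gadd x y) z;
  gadd0l : forall x, gadd g0 x = x;
  gadd0r : forall x, gadd x g0 = x;
  gaddNl : forall x, gadd (gopp x) x = g0;
  gaddNr : forall x, gadd x (gopp x) = g0;
  gd : gcar -> gcar -> V;
  gd_refl : forall x, qle (qk V) (gd x x);
  gd_trans : forall x y z, qle (qten (gd x y) (gd y z)) (gd x z);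
  gd_add : forall x1 x2 y1 y2,
      qle (qten (gd x1 x2) (gd y1 y2)) (gd (gadd x1 y1) (gadd x2 y2))
}.

Arguments g0 {V} v.

Record vhom (V : quantale) (A B : vgrp V) : Type := VHom {
  hfun :> A -> B;
  hadd : forall x y, hfun (gadd x y) = gadd (hfun x) (hfun y);
  hd : forall x y, qle (gd x y) (gd (hfun x) (hfun y))
}.

Section Constructions.
Variable V : quantale.

Lemma hom_zero (A B : vgrp V) (f : vhom A B) : f (g0 A) = g0 B.
Proof.
  assert (H : f (g0 A) = gadd (f (g0 A)) (f (g0 A))).
  { rewrite <- hadd, gadd0l; reflexivity. }
  transitivity (gadd (gadd (gopp (f (g0 A))) (f (g0 A))) (f (g0 A))).
  - rewrite gaddNl, gadd0l; reflexivity.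
  - rewrite <- gaddA, <- H; apply gaddNl.
Qed.

Lemma hom_opp (A B : vgrp V) (f : vhom A B) (x : A) : f (gopp x) = gopp (f x).
Proof.
  assert (H : gadd (f (gopp x)) (f x) = g0 B).
  { rewrite <- hadd, gaddNl; apply hom_zero. }
  rewrite <- (gadd0r (f (gopp x))), <- (gaddNr (f x)), gaddA, H, gadd0l.
  reflexivity.
Qed.

Definition subgrp (A : vgrp V) (P : A -> Prop) (P0 : P (g0 A))
  (Padd : forall x y, P x -> P y -> P (gadd x y))
  (Popp : forall x, P x -> P (gopp x)) : vgrp V.
Proof.
  refine (@VGrp V {x : A | P x} (exist _ (g0 A) P0)
    (fun u v => exist _ (gadd (proj1_sig u) (proj1_sig v))
                  (Padd _ _ (proj2_sig u) (proj2_sig v)))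
    (fun u => exist _ (gopp (proj1_sig u)) (Popp _ (proj2_sig u)))
    _ _ _ _ _ (fun u v => gd (proj1_sig u) (proj1_sig v)) _ _ _).
  - intros [x ?] [y ?] [z ?]; apply subset_eq_compat; apply gaddA.
  - intros [x ?]; apply subset_eq_compat; apply gadd0l.
  - intros [x ?]; apply subset_eq_compat; apply gadd0r.
  - intros [x ?]; apply subset_eq_compat; apply gaddNl.
  - intros [x ?]; apply subset_eq_compat; apply gaddNr.
  - intros [x ?]; apply gd_refl.
  - intros [x ?] [y ?] [z ?]; apply gd_trans.
  - intros [x1 ?] [x2 ?] [y1 ?] [y2 ?]; apply gd_add.
Defined.

Definition subincl (A : vgrp V) P P0 Padd Popp :
  vhom (@subgrp A P P0 Padd Popp) A.
Proof.
  refine (@VHom V (@subgrp A P P0 Padd Popp) A (fun u : {x : A | P x} => proj1_sig u) _ _).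
  - intros; reflexivity.
  - intros; apply qle_refl.
Defined.

Definition prodgrp (A B : vgrp V) : vgrp V.
Proof.
  refine (@VGrp V (A * B)%type (g0 A, g0 B)
    (fun p q => (gadd (fst p) (fst q), gadd (snd p) (snd q)))
    (fun p => (gopp (fst p), gopp (snd p)))
    _ _ _ _ _ (fun p q => qmeet (gd (fst p) (fst q)) (gd (snd p) (snd q))) _ _ _).
  - intros [] [] []; simpl; rewrite !gaddA; reflexivity.
  - intros []; simpl; rewrite !gadd0l; reflexivity.
  - intros []; simpl; rewrite !gadd0r; reflexivity.
  - intros []; simpl; rewrite !gaddNl; reflexivity.
  - intros []; simpl; rewrite !gaddNr; reflexivity.
  - intros []; apply qmeet_glb; apply gd_refl.
  - intros [] [] []; simpl. eapply qle_trans; [apply qten_meet|].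
    apply qmeet_glb; eapply qle_trans;
      [apply qmeet_l | apply gd_trans | apply qmeet_r | apply gd_trans].
  - intros [] [] [] []; simpl. eapply qle_trans; [apply qten_meet|].
    apply qmeet_glb; eapply qle_trans;
      [apply qmeet_l | apply gd_add | apply qmeet_r | apply gd_add].
Defined.

Definition prod_snd (A B : vgrp V) : vhom (prodgrp A B) B.
Proof.
  refine (@VHom V (prodgrp A B) B (fun p => snd p) _ _).
  - intros; reflexivity.
  - intros; apply qmeet_r.
Defined.

Definition diag (Y : vgrp V) : vhom Y (prodgrp Y Y).
Proof.
  refine (@VHom V Y (prodgrp Y Y) (fun y => (y, y)) _ _).
  - intros; reflexivity.
  - intros; apply qmeet_glb; apply qle_refl.
Defined.

Lemma diag_split (Y : vgrp V) : forall y : Y, prod_snd Y Y (diag Y y) = y.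
Proof. reflexivity. Qed.

Definition kergrp (A B : vgrp V) (f : vhom A B) : vgrp V.
Proof.
  refine (@subgrp A (fun x => f x = g0 B) (hom_zero f) _ _).
  - intros x y Hx Hy; rewrite hadd, Hx, Hy; apply gadd0l.
  - intros x Hx; rewrite hom_opp, Hx, <- (gadd0l (gopp (g0 B))); apply gaddNr.
Defined.

Definition kerincl (A B : vgrp V) (f : vhom A B) : vhom (kergrp f) A.
Proof. unfold kergrp. apply subincl. Defined.

Definition pbgrp (A Y Z : vgrp V) (f : vhom A Y) (g : vhom Z Y) : vgrp V.
Proof.
  refine (@subgrp (prodgrp Z A) (fun p => g (fst p) = f (snd p)) _ _ _).
  - simpl; rewrite !hom_zero; reflexivity.
  - intros [z a] [z' a'] H H'; simpl in *; rewrite !hadd, H, H'; reflexivity.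
  - intros [z a] H; simpl in *; rewrite !hom_opp, H; reflexivity.
Defined.

Definition pb_proj (A Y Z : vgrp V) (f : vhom A Y) (g : vhom Z Y) :
  vhom (pbgrp f g) Z.
Proof.
  refine (@VHom V (pbgrp f g) Z (fun p => fst (proj1_sig p)) _ _).
  - intros; reflexivity.
  - intros [[z a] ?] [[z' a'] ?]; apply qmeet_l.
Defined.

Definition pb_sec (A Y Z : vgrp V) (f : vhom A Y) (s : vhom Y A)
  (Hs : forall y, f (s y) = y) (g : vhom Z Y) : vhom Z (pbgrp f g).
Proof.
  refine (@VHom V Z (pbgrp f g)
            (fun z => exist _ (z, s (g z)) (eq_sym (Hs (g z)))) _ _).
  - intros x y; apply subset_eq_compat; simpl; rewrite !hadd; reflexivity.
  - intros x y; simpl; apply qmeet_glb; [apply qle_refl|].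
    eapply qle_trans; [apply (hd g) | apply (hd s)].
Defined.

Definition is_mono (M C : vgrp V) (m : vhom M C) : Prop :=
  forall (Z : vgrp V) (u v : vhom Z M),
    (forall z, m (u z) = m (v z)) -> forall z, u z = v z.

Definition is_iso (M C : vgrp V) (m : vhom M C) : Prop :=
  exists n : vhom C M, (forall x, n (m x) = x) /\ (forall y, m (n y) = y).

Definition factors_through (A M C : vgrp V) (f : vhom A C) (m : vhom M C) : Prop :=
  exists f' : vhom A M, forall x, m (f' x) = f x.

Definition jointly_strongly_epi (A B C : vgrp V) (f : vhom A C) (g : vhom B C) : Prop :=
  forall (M : vgrp V) (m : vhom M C),
    is_mono m -> factors_through f m -> factors_through g m -> is_iso m.

Definition strong_point (A Y : vgrp V) (f : vhom A Y) (s : vhom Y A) : Prop :=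
  jointly_strongly_epi (kerincl f) s.

Definition stably_strong (A Y : vgrp V) (f : vhom A Y) (s : vhom Y A)
  (Hs : forall y, f (s y) = y) : Prop :=
  forall (Z : vgrp V) (g : vhom Z Y), strong_point (pb_proj f g) (pb_sec Hs g).

Definition strongly_unital (Y : vgrp V) : Prop :=
  stably_strong (@diag_split Y).

End Constructions.

(* Main.v *)
Require Import Defs.
From Stdlib Require Import ProofIrrelevance Setoid.
Set Implicit Arguments.
Unset Strict Implicit.

Lemma le_top (V : quantale) (x : V) : qle x (qtop V).
Proof. apply qsup_ub. exact I. Qed.

Lemma ten_le_l (V : quantale) (Hk : qk V = qtop V) (x y : V) : qle (qten x y) x.
Proof.
  apply qle_trans with (qten x (qk V)).
  - apply qten_mono_r. rewrite Hk. apply le_top.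
  - rewrite qten_comm, qten_unit. apply qle_refl.
Qed.

Lemma ten_le_r (V : quantale) (Hk : qk V = qtop V) (x y : V) : qle (qten x y) y.
Proof. rewrite qten_comm. apply ten_le_l; auto. Qed.

Lemma ten_le_meet (V : quantale) (Hk : qk V = qtop V) (x y : V) : qle (qten x y) (qmeet x y).
Proof. apply qmeet_glb; [apply ten_le_l|apply ten_le_r]; auto. Qed.

Lemma meet_comm (V : quantale) (x y : V) : qmeet x y = qmeet y x.
Proof. apply qle_antisym; apply qmeet_glb; auto using qmeet_l, qmeet_r. Qed.

Definition himp (V : quantale) (a c : V) : V := qsup (fun z => qle (qmeet z a) c).

Lemma himp_intro (V : quantale) (a c z : V) : qle (qmeet z a) c -> qle z (himp a c).
Proof. intro H. apply qsup_ub. exact H. Qed.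

Lemma himp_elim (V : quantale) (HF : is_frame V) (a c : V) : qle (qmeet (himp a c) a) c.
Proof.
  rewrite meet_comm. unfold himp. rewrite HF. apply qsup_least.
  intros x [s [Hs ->]]. rewrite meet_comm. exact Hs.
Qed.

Lemma k_le_gd (V : quantale) (Hk : qk V = qtop V) (Y : vgrp V) (x : Y) (v : V) :
  qle v (gd x x).
Proof. eapply qle_trans; [|apply gd_refl]. rewrite Hk. apply le_top. Qed.

Lemma transl_l (V : quantale) (Hk : qk V = qtop V) (Y : vgrp V) (a x y : Y) :
  qle (gd x y) (gd (gadd a x) (gadd a y)).
Proof.
  eapply qle_trans; [|apply gd_add].
  rewrite <- (qten_unit (gd x y)) at 1. apply qten_mono; [apply gd_refl|apply qle_refl].
Qed.

Lemma transl_r (V : quantale) (Hk : qk V = qtop V) (Y : vgrp V) (a x y : Y) :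
  qle (gd x y) (gd (gadd x a) (gadd y a)).
Proof.
  eapply qle_trans; [|apply gd_add].
  rewrite <- (qten_unit (gd x y)) at 1. rewrite qten_comm.
  apply qten_mono; [apply qle_refl|apply gd_refl].
Qed.

Lemma cancel_r (V : quantale) (Hk : qk V = qtop V) (Y : vgrp V) (a x y : Y) :
  qle (gd (gadd x a) (gadd y a)) (gd x y).
Proof.
  eapply qle_trans. apply (transl_r Hk (gopp a)).
  rewrite <- !gaddA, gaddNr, !gadd0r. apply qle_refl.
Qed.

Lemma cancel_l (V : quantale) (Hk : qk V = qtop V) (Y : vgrp V) (a x y : Y) :
  qle (gd (gadd a x) (gadd a y)) (gd x y).
Proof.
  eapply qle_trans. apply (transl_l Hk (gopp a)).
  rewrite !gaddA, gaddNl, !gadd0l. apply qle_refl.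
Qed.

Lemma ten_swap (V : quantale) (a b c d : V) :
  qten (qten a b) (qten c d) = qten (qten a c) (qten b d).
Proof.
  rewrite <- !qten_assoc. f_equal. rewrite !qten_assoc. f_equal. apply qten_comm.
Qed.

Definition tensgrp (V : quantale) (Y : vgrp V) : vgrp V.
Proof.
  refine (@VGrp V (Y * Y)%type (g0 Y, g0 Y)
    (fun p q => (gadd (fst p) (fst q), gadd (snd p) (snd q)))
    (fun p => (gopp (fst p), gopp (snd p)))
    _ _ _ _ _ (fun p q => qten (gd (fst p) (fst q)) (gd (snd p) (snd q))) _ _ _).
  - intros [] [] []; simpl; rewrite !gaddA; reflexivity.
  - intros []; simpl; rewrite !gadd0l; reflexivity.
  - intros []; simpl; rewrite !gadd0r; reflexivity.
  - intros []; simpl; rewrite !gaddNl; reflexivity.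
  - intros []; simpl; rewrite !gaddNr; reflexivity.
  - intros []; simpl. rewrite <- (qten_unit (qk V)) at 1. apply qten_mono; apply gd_refl.
  - intros [] [] []; simpl. rewrite ten_swap. apply qten_mono; apply gd_trans.
  - intros [] [] [] []; simpl. rewrite ten_swap. apply qten_mono; apply gd_add.
Defined.

Definition zerohom (V : quantale) (Hk : qk V = qtop V) (Y : vgrp V) : vhom Y Y.
Proof.
  refine (@VHom V Y Y (fun _ => g0 Y) _ _).
  - intros; simpl; symmetry; apply gadd0l.
  - intros; apply k_le_gd; auto.
Defined.

Definition m1 (V : quantale) (Hk : qk V = qtop V) (Y : vgrp V) :
  vhom (tensgrp Y) (pbgrp (prod_snd Y Y) (zerohom Hk Y)).
Proof.
  refine (@VHom V (tensgrp Y) (pbgrp (prod_snd Y Y) (zerohom Hk Y))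
     (fun p => exist _ (fst p, (snd p, g0 Y)) eq_refl) _ _).
  - intros [] []; apply subset_eq_compat; simpl. rewrite gadd0l. reflexivity.
  - intros [z a] [z' a']; simpl. apply qmeet_glb; [apply ten_le_l; auto|].
    apply qmeet_glb; [apply ten_le_r; auto| apply k_le_gd; auto].
Defined.

Lemma lemmaA (V : quantale) (Hk : qk V = qtop V) (Y : vgrp V) (HY : strongly_unital Y)
  (z z' a a' : Y) : qle (qmeet (gd z z') (gd a a')) (qten (gd z z') (gd a a')).
Proof.
  assert (Hiso : is_iso (m1 Hk Y)).
  { apply (HY Y (zerohom Hk Y)).
    - intros W u v H w. specialize (H w).
      destruct (u w) as [p1 p2], (v w) as [q1 q2]. simpl in H.
      apply (f_equal (@proj1_sig _ _)) in H. simpl in H. inversion H; reflexivity.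
    - unshelve eexists.
      + refine (@VHom V (kergrp (pb_proj (prod_snd Y Y) (zerohom Hk Y))) (tensgrp Y)
          (fun x : {x : {x : Y * (Y * Y) | g0 Y = snd (snd x)} | fst (proj1_sig x) = g0 Y} => (fst (proj1_sig (proj1_sig x)), fst (snd (proj1_sig (proj1_sig x))))) _ _).
        * intros [[[z0 [a1 a2]] p] q] [[[z0' [a1' a2']] p'] q']; reflexivity.
        * intros [[[z0 [a1 a2]] p] q] [[[z0' [a1' a2']] p'] q']; simpl in *.
          subst. eapply qle_trans; [|apply qten_mono; [apply gd_refl|apply qle_refl]].
          rewrite qten_unit. eapply qle_trans; [apply qmeet_r|apply qmeet_l].
      + intros [[[z0 [a1 a2]] p] q]; simpl in *. subst. apply subset_eq_compat. reflexivity.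
    - unshelve eexists.
      + refine (@VHom V Y (tensgrp Y) (fun z => (z, g0 Y)) _ _).
        * intros; simpl. rewrite gadd0l. reflexivity.
        * intros; simpl. rewrite qten_comm.
          eapply qle_trans; [|apply qten_mono; [apply gd_refl|apply qle_refl]].
          rewrite qten_unit. apply qle_refl.
      + intros z0. apply subset_eq_compat. reflexivity. }
  destruct Hiso as [n [Hnm Hmn]].
  pose proof (hd n (m1 Hk Y (z, a)) (m1 Hk Y (z', a'))) as H.
  rewrite !Hnm in H. simpl in H.
  eapply qle_trans; [|exact H].
  apply qmeet_glb; [apply qmeet_l|]. apply qmeet_glb; [apply qmeet_r|apply k_le_gd; auto].
Qed.


Lemma himp_app (V : quantale) (HF : is_frame V) (X a c : V) :
  qle X (himp a c) -> qle X a -> qle X c.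
Proof. intros H1 H2. eapply qle_trans; [apply qmeet_glb; [exact H1|exact H2]|apply himp_elim; auto]. Qed.

Lemma wtrans (V : quantale) (Hk : qk V = qtop V) (Y : vgrp V)
  (HA : forall z z' a a' : Y, qle (qmeet (gd z z') (gd a a')) (qten (gd z z') (gd a a')))
  (W : V) (x y z : Y) : qle W (gd x y) -> qle W (gd y z) -> qle W (gd x z).
Proof.
  intros H1 H2. eapply qle_trans; [apply qmeet_glb; [exact H1|exact H2]|].
  eapply qle_trans; [apply HA|apply gd_trans].
Qed.

Lemma wadd (V : quantale) (Hk : qk V = qtop V) (Y : vgrp V)
  (HA : forall z z' a a' : Y, qle (qmeet (gd z z') (gd a a')) (qten (gd z z') (gd a a')))
  (W : V) (x1 x2 y1 y2 : Y) : qle W (gd x1 x2) -> qle W (gd y1 y2) ->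
  qle W (gd (gadd x1 y1) (gadd x2 y2)).
Proof.
  intros H1 H2. eapply qle_trans; [apply qmeet_glb; [exact H1|exact H2]|].
  eapply qle_trans; [apply HA|apply gd_add].
Qed.

Definition Gd (V : quantale) (Y : vgrp V) (p q : Y * Y) : V :=
  qmeet (gd (fst p) (fst q)) (qmeet (gd (snd p) (snd q)) (himp (gd (fst q) (fst p)) (gd (snd q) (snd p)))).

Lemma Gd1 V Y p q : qle (@Gd V Y p q) (gd (fst p) (fst q)).
Proof. apply qmeet_l. Qed.
Lemma Gd2 V Y p q : qle (@Gd V Y p q) (gd (snd p) (snd q)).
Proof. eapply qle_trans; [apply qmeet_r|apply qmeet_l]. Qed.
Lemma Gd3 V Y p q : qle (@Gd V Y p q) (himp (gd (fst q) (fst p)) (gd (snd q) (snd p))).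
Proof. eapply qle_trans; [apply qmeet_r|apply qmeet_r]. Qed.

Ltac lt H := eapply qle_trans; [|apply H].

Definition Ggrp (V : quantale) (Hk : qk V = qtop V) (HF : is_frame V) (Y : vgrp V)
  (HA : forall z z' a a' : Y, qle (qmeet (gd z z') (gd a a')) (qten (gd z z') (gd a a'))) : vgrp V.
Proof.
  refine (@VGrp V (Y * Y)%type (g0 Y, g0 Y)
    (fun p q => (gadd (fst p) (fst q), gadd (snd p) (snd q)))
    (fun p => (gopp (fst p), gopp (snd p)))
    _ _ _ _ _ (@Gd V Y) _ _ _).
  - intros [] [] []; simpl; rewrite !gaddA; reflexivity.
  - intros []; simpl; rewrite !gadd0l; reflexivity.
  - intros []; simpl; rewrite !gadd0r; reflexivity.
  - intros []; simpl; rewrite !gaddNl; reflexivity.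
  - intros []; simpl; rewrite !gaddNr; reflexivity.
  - intros [x1 x2]; unfold Gd; simpl. apply qmeet_glb; [apply gd_refl|].
    apply qmeet_glb; [apply gd_refl|]. apply himp_intro. apply k_le_gd; auto.
  - intros [p1 p2] [q1 q2] [r1 r2]. eapply qle_trans; [apply ten_le_meet; auto|].
    set (X := qmeet _ _).
    assert (A1 : qle X (gd p1 q1)) by (eapply qle_trans; [apply qmeet_l|apply Gd1]).
    assert (A2 : qle X (gd p2 q2)) by (eapply qle_trans; [apply qmeet_l|apply Gd2]).
    assert (A3 : qle X (himp (gd q1 p1) (gd q2 p2))) by (eapply qle_trans; [apply qmeet_l|apply Gd3]).
    assert (B1 : qle X (gd q1 r1)) by (eapply qle_trans; [apply qmeet_r|apply Gd1]).
    assert (B2 : qle X (gd q2 r2)) by (eapply qle_trans; [apply qmeet_r|apply Gd2]).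
    assert (B3 : qle X (himp (gd r1 q1) (gd r2 q2))) by (eapply qle_trans; [apply qmeet_r|apply Gd3]).
    unfold Gd; simpl. apply qmeet_glb; [eapply wtrans; eauto|].
    apply qmeet_glb; [eapply wtrans; eauto|]. apply himp_intro.
    set (W := qmeet X _).
    assert (C0 : qle W (gd r1 p1)) by apply qmeet_r.
    assert (C1 : qle W X) by apply qmeet_l.
    assert (D1 : qle W (gd r2 q2)).
    { apply (himp_app HF (a:=gd r1 q1)); [eapply qle_trans; [exact C1|exact B3]|].
      apply (wtrans Hk HA (y:=p1)); [exact C0|eapply qle_trans; [exact C1|exact A1]]. }
    assert (D2 : qle W (gd q2 p2)).
    { apply (himp_app HF (a:=gd q1 p1)); [eapply qle_trans; [exact C1|exact A3]|].
      apply (wtrans Hk HA (y:=r1)); [eapply qle_trans; [exact C1|exact B1]|exact C0]. }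
    apply (wtrans Hk HA (y:=q2)); assumption.
  - intros [p1 p2] [p1' p2'] [q1 q2] [q1' q2']. eapply qle_trans; [apply ten_le_meet; auto|].
    set (X := qmeet _ _).
    assert (A1 : qle X (gd p1 p1')) by (eapply qle_trans; [apply qmeet_l|apply Gd1]).
    assert (A2 : qle X (gd p2 p2')) by (eapply qle_trans; [apply qmeet_l|apply Gd2]).
    assert (A3 : qle X (himp (gd p1' p1) (gd p2' p2))) by (eapply qle_trans; [apply qmeet_l|apply Gd3]).
    assert (B1 : qle X (gd q1 q1')) by (eapply qle_trans; [apply qmeet_r|apply Gd1]).
    assert (B2 : qle X (gd q2 q2')) by (eapply qle_trans; [apply qmeet_r|apply Gd2]).
    assert (B3 : qle X (himp (gd q1' q1) (gd q2' q2))) by (eapply qle_trans; [apply qmeet_r|apply Gd3]).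
    unfold Gd; simpl. apply qmeet_glb; [eapply wadd; eauto|].
    apply qmeet_glb; [eapply wadd; eauto|]. apply himp_intro.
    set (W := qmeet X _).
    assert (C0 : qle W (gd (gadd p1' q1') (gadd p1 q1))) by apply qmeet_r.
    assert (C1 : qle W X) by apply qmeet_l.
    assert (E1 : qle W (gd p1' p1)).
    { lt (cancel_r Hk q1'). apply (wtrans Hk HA (y:=gadd p1 q1)); [exact C0|].
      lt (transl_l Hk p1). eapply qle_trans; [exact C1|exact B1]. }
    assert (E2 : qle W (gd q1' q1)).
    { lt (cancel_l Hk p1'). apply (wtrans Hk HA (y:=gadd p1 q1)); [exact C0|].
      lt (transl_r Hk q1). eapply qle_trans; [exact C1|exact A1]. }
    apply (wadd Hk HA).
    + apply (himp_app HF (a:=gd p1' p1)); [eapply qle_trans; [exact C1|exact A3]|exact E1].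
    + apply (himp_app HF (a:=gd q1' q1)); [eapply qle_trans; [exact C1|exact B3]|exact E2].
Defined.

Definition idhom (V : quantale) (Y : vgrp V) : vhom Y Y.
Proof.
  refine (@VHom V Y Y (fun x => x) _ _); intros; [reflexivity|apply qle_refl].
Defined.

Definition m2 (V : quantale) (Hk : qk V = qtop V) (HF : is_frame V) (Y : vgrp V) HA :
  vhom (@Ggrp V Hk HF Y HA) (pbgrp (prod_snd Y Y) (idhom Y)).
Proof.
  refine (@VHom V (@Ggrp V Hk HF Y HA) (pbgrp (prod_snd Y Y) (idhom Y))
     (fun p => exist _ (snd p, (fst p, snd p)) eq_refl) _ _).
  - intros [] []; apply subset_eq_compat; simpl. reflexivity.
  - intros [x1 x2] [x1' x2']; simpl. apply qmeet_glb; [apply Gd2|].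
    apply qmeet_glb; [apply Gd1|apply Gd2].
Defined.

Lemma lemmaB (V : quantale) (Hk : qk V = qtop V) (HF : is_frame V) (Y : vgrp V)
  (HY : strongly_unital Y) (y : Y) : qle (gd (g0 Y) y) (gd y (g0 Y)).
Proof.
  pose proof (lemmaA Hk HY) as HA.
  assert (Hiso : is_iso (m2 Hk HF HA)).
  { apply (HY Y (idhom Y)).
    - intros W u v H w. specialize (H w).
      destruct (u w) as [p1 p2], (v w) as [q1 q2]. simpl in H.
      apply (f_equal (@proj1_sig _ _)) in H. simpl in H. inversion H; reflexivity.
    - unshelve eexists.
      + refine (@VHom V (kergrp (pb_proj (prod_snd Y Y) (idhom Y))) (@Ggrp V Hk HF Y HA)
          (fun x : {x : {x : Y * (Y * Y) | fst x = snd (snd x)} | fst (proj1_sig x) = g0 Y} =>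
             (fst (snd (proj1_sig (proj1_sig x))), snd (snd (proj1_sig (proj1_sig x))))) _ _).
        * intros [[[z0 [a1 a2]] p] q] [[[z0' [a1' a2']] p'] q']; reflexivity.
        * intros [[[z0 [a1 a2]] p] q] [[[z0' [a1' a2']] p'] q']; simpl in *.
          subst. unfold Gd; simpl. apply qmeet_glb; [eapply qle_trans; [apply qmeet_r|apply qmeet_l]|].
          apply qmeet_glb; [apply k_le_gd; auto|]. apply himp_intro. apply k_le_gd; auto.
      + intros [[[z0 [a1 a2]] p] q]; simpl in *. subst. apply subset_eq_compat. reflexivity.
    - unshelve eexists.
      + refine (@VHom V Y (@Ggrp V Hk HF Y HA) (fun z => (z, z)) _ _).
        * intros; reflexivity.
        * intros; unfold Gd; simpl. apply qmeet_glb; [apply qle_refl|].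
          apply qmeet_glb; [apply qle_refl|]. apply himp_intro. apply qmeet_r.
      + intros z0. apply subset_eq_compat. reflexivity. }
  destruct Hiso as [n [Hnm Hmn]].
  pose proof (hd n (m2 Hk HF HA (g0 Y, g0 Y)) (m2 Hk HF HA (g0 Y, y))) as H.
  rewrite !Hnm in H. simpl in H.
  assert (H' : qle (gd (g0 Y) y) (@Gd V Y (g0 Y, g0 Y) (g0 Y, y))).
  { eapply qle_trans; [|exact H]. apply qmeet_glb; [apply qle_refl|].
    apply qmeet_glb; [apply k_le_gd; auto|apply qle_refl]. }
  apply (himp_app HF (a:=gd (g0 Y) (g0 Y))).
  - eapply qle_trans; [exact H'|apply Gd3].
  - apply k_le_gd; auto.
Qed.

Theorem proposition6p4 :
  forall (V : quantale), is_frame V -> qk V = qtop V ->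
  forall (Y : vgrp V), strongly_unital Y ->
  forall y : Y, gd (g0 Y) y = qten (gd y (g0 Y)) (gd (g0 Y) y).
Proof.
  intros V HF Hk Y HY y. apply qle_antisym.
  - eapply qle_trans; [|apply (lemmaA Hk HY)].
    apply qmeet_glb; [apply (lemmaB Hk HF HY)|apply qle_refl].
  - apply ten_le_r; auto.
Qed.
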